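(* Let $n,m\in\mathbb{N}$, $W_0\in\mathbb{R}^{n\times m}$, and $1\le r<\operatorname{rank}(W_0)\le\min(n,m)$. Let $W_0=U\Sigma_0V^T$ be a singular value decomposition with $U\in\mathbb{R}^{n\times n}$, $V\in\mathbb{R}^{m\times m}$ orthogonal, $\Sigma_0\in\mathbb{R}^{n\times m}$ diagonal with singular values $s_{0,1}\ge s_{0,2}\ge\dots\ge s_{0,\min(n,m)}\ge 0$, and let $\mathbf{u}_i,\mathbf{v}_i$ denote the $i$-th columns of $U,V$. Assume the LoRA gradient-descent iterates for $\min_{B\in\mathbb{R}^{n\times r},A\in\mathbb{R}^{r\times m}}\frac12\|W_0-BA\|^2$ remain uniformly bounded. Let $\tilde X_0\in\mathbb{R}^{r\times m}$ have all off-diagonal entries zero and all diagonal entries $\tilde x_{ii}(0)$, $i=1,\dots,r$, nonzero (e.g. drawn i.i.d. from $\mathcal{N}(0,\sigma^2)$, $\sigma^2>0$). Let $(Y,X)$ solve the gradient flow $$Y'(t)=\big(W_0-Y(t)X(t)\big)X(t)^T,\quad X'(t)=Y(t)^T\big(W_0-Y(t)X(t)\big),\quad Y(0)=\mathbf{0}_{n\times r},\ X(0)=\tilde X_0V^T.$$ Then $$\lim_{t\to\infty}Y(t)X(t)=\sum_{i=1}^r s_{0,i}\,\mathbf{u}_i\mathbf{v}_i^T\qquad\text{and}\qquad \lim_{t\to\infty}\|W_0-Y(t)X(t)\|^2=\sum_{i=r+1}^{\min(n,m)}s_{0,i}^2,$$ i.e. the flow converges to the optimal rank-$r$ approximation of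 $W_0$ and attains the optimal rank-$r$ approximation error given by the Eckart--Young--Mirsky theorem; this is also the approximation error between the converged rank-$r$ solution and the full-rank solution $W_0$.
   Context: $\|\cdot\|$ is the Frobenius norm. ''LoRA gradient-descent iterates'' are the iterates of fixed-step gradient descent on the factors $B,A$ of $g(B,A)=\frac12\|W_0-BA\|^2$; uniform boundedness means their Frobenius norms are bounded independently of step size and iteration. The initialization corresponds to $\tilde Y(0)=U^TY(0)=\mathbf{0}$ and $\tilde X(0)=X(0)V=\tilde X_0$ (spectral initialization). *)

(* Defs.v *)
From HB Require Import structures.
From mathcomp Require Import all_boot all_order all_algebra.
From mathcomp Require Import all_classical all_reals all_analysis.
Set Implicit Arguments. Unset Strict Implicit. Unset Printing Implicit Defensive.
Import Order.TTheory GRing.Theory Num.Theory.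
Import numFieldNormedType.Exports.
Local Open Scope ring_scope.

Definition frob2 (R : realType) (p q : nat) (A : 'M[R]_(p, q)) : R :=
  \sum_(i < p) \sum_(j < q) A i j ^+ 2.

Definition frob (R : realType) (p q : nat) (A : 'M[R]_(p, q)) : R :=
  Num.sqrt (frob2 A).

(* Fixed-step gradient descent (step eta) on the LoRA factors (B, A) of
   g(B,A) = 1/2 ||W0 - B A||^2, started at (B0, A0):
     B_{k+1} = B_k + eta (W0 - B_k A_k) A_k^T,
     A_{k+1} = A_k + eta B_k^T (W0 - B_k A_k). *)
Fixpoint lora_gd (R : realType) (n m r : nat) (W0 : 'M[R]_(n, m))
    (B0 : 'M[R]_(n, r)) (A0 : 'M[R]_(r, m)) (eta : R) (k : nat)
    : 'M[R]_(n, r) * 'M[R]_(r, m) :=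
  match k with
  | 0 => (B0, A0)
  | k'.+1 =>
      let BA := lora_gd W0 B0 A0 eta k' in
      let B := BA.1 in let A := BA.2 in
      (B + eta *: ((W0 - B *m A) *m A^T), A + eta *: (B^T *m (W0 - B *m A)))
  end.

Definition lora_gd_bounded (R : realType) (n m r : nat) (W0 : 'M[R]_(n, m))
    (B0 : 'M[R]_(n, r)) (A0 : 'M[R]_(r, m)) : Prop :=
  exists2 eta0 : R, 0 < eta0 &
  exists M : R, forall eta : R, 0 < eta -> eta <= eta0 -> forall k : nat,
    frob (lora_gd W0 B0 A0 eta k).1 <= M /\ frob (lora_gd W0 B0 A0 eta k).2 <= M.

(* Main.v *)
Require Import Defs.
From HB Require Import structures.
From mathcomp Require Import all_boot all_order all_algebra.
From mathcomp Require Import all_classical all_reals all_analysis.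
From mathcomp Require Import ring lra.
Import Order.TTheory GRing.Theory Num.Theory.
Import numFieldNormedType.Exports.
Local Open Scope ring_scope.
Local Open Scope classical_set_scope.
Set Implicit Arguments. Unset Strict Implicit. Unset Printing Implicit Defensive.

Lemma frob2_ge0 (R : realType) p q (A : 'M[R]_(p, q)) : 0 <= frob2 A.
Proof. by rewrite /frob2; apply: sumr_ge0 => i _; apply: sumr_ge0 => j _; apply: sqr_ge0. Qed.

Definition ip (R : realType) p q (A B : 'M[R]_(p, q)) : R :=
  \sum_(i < p) \sum_(j < q) A i j * B i j.

Lemma ip_le (R : realType) p q (A B : 'M[R]_(p, q)) :
  2 * ip A B <= frob2 A + frob2 B.
Proof.
rewrite /ip /frob2 mulr_sumr -big_split /=; apply: ler_sum => i _.
rewrite mulr_sumr -big_split /=; apply: ler_sum => j _.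
have := sqr_ge0 (A i j - B i j); nra.
Qed.

Lemma frob2D (R : realType) p q (A B : 'M[R]_(p, q)) :
  frob2 (A + B) <= 2 * (frob2 A + frob2 B).
Proof.
rewrite /frob2 -big_split mulr_sumr /=; apply: ler_sum => i _.
rewrite -big_split mulr_sumr /=; apply: ler_sum => j _.
rewrite !mxE; have := sqr_ge0 (A i j - B i j); nra.
Qed.

Lemma frob2N (R : realType) p q (A : 'M[R]_(p, q)) : frob2 (- A) = frob2 A.
Proof. by apply: eq_bigr => i _; apply: eq_bigr => j _; rewrite mxE sqrrN. Qed.

Lemma frob2B (R : realType) p q (A B : 'M[R]_(p, q)) :
  frob2 (A - B) <= 2 * (frob2 A + frob2 B).
Proof. by rewrite -(frob2N B) frob2D. Qed.

Lemma frob2_tr (R : realType) p q (A : 'M[R]_(p, q)) : frob2 A^T = frob2 A.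
Proof. by rewrite /frob2 exchange_big; apply: eq_bigr => i _; apply: eq_bigr => j _; rewrite mxE. Qed.

Lemma cauchy_schwarz (R : realType) k (a b : 'I_k -> R) :
  (\sum_i a i * b i) ^+ 2 <= (\sum_i a i ^+ 2) * (\sum_i b i ^+ 2).
Proof.
set A := \sum_i a i ^+ 2; set B := \sum_i b i ^+ 2; set C := \sum_i a i * b i.
have H : 0 <= \sum_(i < k) \sum_(j < k) (a i * b j - a j * b i) ^+ 2.
  by apply: sumr_ge0 => i _; apply: sumr_ge0 => j _; apply: sqr_ge0.
have E1 : forall i : 'I_k, \sum_(j < k) (a i * b j - a j * b i) ^+ 2 =
   a i ^+ 2 * B + b i ^+ 2 * A - 2 * (a i * b i) * C.
  move=> i; rewrite /A /B /C !mulr_sumr -!big_split /= -sumrB.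
  by apply: eq_bigr => j _; ring.
have E2 : \sum_(i < k) \sum_(j < k) (a i * b j - a j * b i) ^+ 2 = 2 * (A * B) - 2 * C ^+ 2.
  rewrite (eq_bigr _ (fun i _ => E1 i)) sumrB big_split /= -!mulr_suml.
  rewrite -/A -/B -mulr_sumr -/C; ring.
rewrite E2 in H; lra.
Qed.

Lemma frob2M (R : realType) p q s (A : 'M[R]_(p, q)) (B : 'M[R]_(q, s)) :
  frob2 (A *m B) <= frob2 A * frob2 B.
Proof.
rewrite /frob2 mulr_suml; apply: ler_sum => i _.
have -> : \sum_(k < q) \sum_(j < s) B k j ^+ 2 = \sum_(j < s) \sum_(k < q) B k j ^+ 2.
  exact: exchange_big.
rewrite mulr_sumr; apply: ler_sum => j _; rewrite mxE; exact: cauchy_schwarz.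
Qed.
Lemma is_derive_mxP (R : realType) p q (M : R -> 'M[R]_(p, q)) (t : R) (D : 'M[R]_(p, q)) :
  is_derive t 1 M D <-> (forall i j, is_derive t 1 (fun x => M x i j) (D i j)).
Proof.
split.
- move=> HD i j.
  have dM : derivable M t 1 by case: HD.
  have := derive_mx dM; rewrite derive_val => -> .
  rewrite mxE; apply: derivableP.
  by move: dM => /derivable_mxP; apply.
- move=> H.
  have dM : derivable M t 1.
    by apply/derivable_mxP => i j; case: (H i j).
  apply: DeriveDef => //; rewrite derive_mx //.
  by apply/matrixP => i j; rewrite mxE derive_val.
Qed.

Lemma cvg_mx_entry (R : realType) p q (T : Type) (F : set_system T) {FF : Filter F}
  (M : T -> 'M[R]_(p, q)) (L : 'M[R]_(p, q)) i j :
  M x @[x --> F] --> L -> M x i j @[x --> F] --> L i j.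
Proof.
move=> H; apply: (cvg_comp M (fun N : 'M[R]_(p, q) => N i j) H).
exact: coord_continuous.
Qed.

Lemma cvg_entries_mx (R : realType) p q (T : Type) (F : set_system T) {FF : Filter F}
  (M : T -> 'M[R]_(p, q)) (L : 'M[R]_(p, q)) :
  (forall i j, M x i j @[x --> F] --> L i j) -> M x @[x --> F] --> L.
Proof.
move=> H; apply/cvgrPdist_le => /= e e0.
near=> x.
rewrite /Num.Def.normr/= mx_normrE (bigmax_le _ (ltW e0))//= => i _.
rewrite !mxE/=.
move: i; near: x; apply: filter_forall => /= i.
exact: ((cvgrPdist_le _ _).1 (H i.1 i.2)).
Unshelve. all: by end_near. Qed.

Lemma is_derive_cvg (R : realType) (V : normedModType R) (f : R -> V) (t : R) (df : V) :
  is_derive t 1 f df -> f x @[x --> t] --> f t.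
Proof.
move=> [d _]; apply: differentiable_continuous.
by apply/derivable1_diffP.
Qed.

Lemma is_derive_comp1 (R : realType) (f g : R -> R) (x df dg : R) :
  is_derive x 1 f df -> is_derive (f x) 1 g dg -> is_derive x 1 (g \o f) (dg * df).
Proof.
move=> [f1 f2] [g1 g2].
have dc : derivable (g \o f) x 1.
  apply/derivable1_diffP; apply: differentiable_comp; exact/derivable1_diffP.
apply: DeriveDef => //.
rewrite -derive1E derive1_comp // !derive1E f2 g2 //.
Qed.
Lemma is_deriveM1 (R : realType) (f g : R -> R) (x df dg : R) :
  is_derive x 1 f df -> is_derive x 1 g dg ->
  is_derive x 1 (fun t => f t * g t) (f x * dg + g x * df).
Proof. move=> Hf Hg; have := is_deriveM Hf Hg; by []. Qed.

Lemma is_deriveD1 (R : realType) (f g : R -> R) (x df dg : R) :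
  is_derive x 1 f df -> is_derive x 1 g dg ->
  is_derive x 1 (fun t => f t + g t) (df + dg).
Proof. move=> Hf Hg; have := is_deriveD Hf Hg; by []. Qed.

Lemma is_deriveB1 (R : realType) (f g : R -> R) (x df dg : R) :
  is_derive x 1 f df -> is_derive x 1 g dg ->
  is_derive x 1 (fun t => f t - g t) (df - dg).
Proof. move=> Hf Hg; have := is_deriveB Hf Hg; by []. Qed.

Lemma is_derive_lin1 (R : realType) (c x : R) :
  is_derive x 1 (fun t => c * t) c.
Proof.
have := is_deriveM (is_derive_cst c x 1) (is_derive_id x 1).
move=> H; apply: is_derive_eq H _; by rewrite scaler0 addr0 /cst [_%:A]mulr1.
Qed.

Lemma gronwall (R : realType) (E dE : R -> R) (K T : R) :
  0 < T ->
  (forall t : R, 0 < t -> t <= T -> is_derive t 1 E (dE t)) ->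
  (forall t : R, 0 < t -> t < T -> dE t <= K * E t) ->
  E t @[t --> 0^'+] --> E 0 -> E 0 = 0 -> E T <= 0.
Proof.
move=> T0 dEd dEle E0c E00.
pose g := fun t : R => expR (- K * t).
have dg : forall t : R, is_derive t 1 g (expR (- K * t) * - K).
  move=> t; apply: (is_derive_comp1 (f := fun t => - K * t) (g := expR)).
    exact: is_derive_lin1.
pose h := fun t => E t * g t.
have dh : forall t : R, 0 < t -> t <= T ->
    is_derive t 1 h (E t * (expR (- K * t) * - K) + g t * dE t).
  move=> t t0 tT; exact: (is_deriveM1 (dEd t t0 tT) (dg t)).
have hc : {within `[0, T], continuous h}.
  apply/continuous_within_itvP => //; split.
  - move=> x; rewrite in_itv /= => /andP[x0 xT].
    exact: (is_derive_cvg (dh x x0 (ltW xT))).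
  - apply: cvgM => //.
    apply: cvg_at_right_filter; exact: (is_derive_cvg (dg 0)).
  - apply: cvg_at_left_filter; exact: (is_derive_cvg (dh T T0 (lexx _))).
have hT : h T <= h 0.
  apply: (@ler0_derive1_le_cc _ h 0 T) => //.
  - move=> x; rewrite in_itv /= => /andP[x0 xT]; by case: (dh x x0 (ltW xT)).
  - move=> x; rewrite in_itv /= => /andP[x0 xT].
    have dhx := dh x x0 (ltW xT); rewrite derive1E derive_val /g.
    have := dEle x x0 xT; have := expR_gt0 (- K * x) => ep.
    set ex := expR _ => H; rewrite mulrC -mulrA -mulrDr.
    apply: mulr_ge0_le0; first exact: ltW.
    lra.
  - by rewrite in_itv /= lexx ltW.
  - by rewrite in_itv /= lexx ltW.
  - exact: ltW.
move: hT; rewrite /h /g E00 mul0r => hT.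
have := expR_gt0 (- K * T) => ep.
nra.
Qed.
Lemma cvg_sum1 (R : realType) (T : Type) (F : set_system T) {FF : Filter F} k
  (f : 'I_k -> T -> R) (l : 'I_k -> R) :
  (forall i, f i x @[x --> F] --> l i) -> \sum_i f i x @[x --> F] --> \sum_i l i.
Proof. by move=> H; apply: cvg_big => //; exact: add_continuous. Qed.

Lemma cvg_frob2 (R : realType) p q (T : Type) (F : set_system T) {FF : Filter F}
  (M : T -> 'M[R]_(p, q)) (L : 'M[R]_(p, q)) :
  M x @[x --> F] --> L -> frob2 (M x) @[x --> F] --> frob2 L.
Proof.
move=> H; apply: cvg_sum1 => i; apply: cvg_sum1 => j.
have Hij : M x i j @[x --> F] --> L i j by apply: cvg_mx_entry.
by rewrite expr2; apply: cvgM.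
Qed.

Lemma is_derive_sum1 (R : realType) k (F : 'I_k -> R -> R) (dF : 'I_k -> R) (x : R) :
  (forall i, is_derive x 1 (F i) (dF i)) ->
  is_derive x 1 (fun t => \sum_i F i t) (\sum_i dF i).
Proof. by move=> H; have := is_derive_sum H; rewrite fct_sumE. Qed.

Lemma is_derive_frob2 (R : realType) p q (M : R -> 'M[R]_(p, q)) (t : R) D :
  is_derive t 1 M D -> is_derive t 1 (fun x => frob2 (M x)) (2 * ip (M t) D).
Proof.
move/is_derive_mxP => H.
rewrite /ip mulr_sumr; apply: is_derive_sum1 => i.
rewrite mulr_sumr; apply: is_derive_sum1 => j.
have := is_deriveM1 (H i j) (H i j).
by move=> H2; apply: is_derive_eq H2 _; rewrite mulr2n mulrDl !mul1r.
Qed.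
Lemma telesc (V : zmodType) (s1 s2 p1 p2 q1 q2 : V) :
  s1 - p1 - (s2 - p2) = (s1 - s2) - ((p1 - q1) + (q1 - q2) + (q2 - p2)).
Proof.
rewrite subrKA subrKA opprB opprB addrACA [in RHS]addrACA.
by rewrite [-p1 + _]addrC.
Qed.

Lemma trmxB' (R : realType) p q (A B : 'M[R]_(p, q)) : (A - B)^T = A^T - B^T.
Proof. by apply/matrixP => i j; rewrite !mxE. Qed.

Definition FY (R : realType) n m r (S : 'M[R]_(n, m)) (Y : 'M[R]_(n, r)) (X : 'M[R]_(r, m)) :=
  (S - Y *m X) *m X^T.
Definition FX (R : realType) n m r (S : 'M[R]_(n, m)) (Y : 'M[R]_(n, r)) (X : 'M[R]_(r, m)) :=
  Y^T *m (S - Y *m X).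

Lemma FY_diff (R : realType) n m r (S : 'M[R]_(n, m)) (Y1 Y2 : 'M[R]_(n, r)) (X1 X2 : 'M[R]_(r, m)) :
  FY S Y1 X1 - FY S Y2 X2 = S *m (X1 - X2)^T -
     ((Y1 - Y2) *m X1 *m X1^T + Y2 *m (X1 - X2) *m X1^T + Y2 *m X2 *m (X1 - X2)^T).
Proof.
rewrite /FY ?trmxB' ?mulmxBl ?mulmxBr ?mulmxBl ?mulmxA.
exact: telesc.
Qed.

Lemma FX_diff (R : realType) n m r (S : 'M[R]_(n, m)) (Y1 Y2 : 'M[R]_(n, r)) (X1 X2 : 'M[R]_(r, m)) :
  FX S Y1 X1 - FX S Y2 X2 = (Y1 - Y2)^T *m S -
     ((Y1 - Y2)^T *m Y1 *m X1 + Y2^T *m (Y1 - Y2) *m X1 + Y2^T *m Y2 *m (X1 - X2)).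
Proof.
rewrite /FX ?trmxB' ?mulmxBl ?mulmxBr ?mulmxBl ?mulmxA.
exact: telesc.
Qed.
Lemma frob2M3 (R : realType) p q s u (A : 'M[R]_(p, q)) (B : 'M[R]_(q, s)) (C : 'M[R]_(s, u)) :
  frob2 (A *m B *m C) <= frob2 A * frob2 B * frob2 C.
Proof.
apply: le_trans (frob2M _ _) _; apply: ler_wpM2r; first exact: frob2_ge0.
exact: frob2M.
Qed.

Lemma ler_pM3 (R : realType) (x y z x' y' z' : R) :
  0 <= x -> 0 <= y -> 0 <= z -> x <= x' -> y <= y' -> z <= z' -> x * y * z <= x' * y' * z'.
Proof.
move=> x0 y0 z0 xx yy zz; apply: ler_pM => //; first exact: mulr_ge0.
exact: ler_pM.
Qed.

Lemma frob2_4 (R : realType) p q (P Q1 Q2 Q3 : 'M[R]_(p, q)) :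
  frob2 (P - (Q1 + Q2 + Q3)) <= 8 * (frob2 P + frob2 Q1 + frob2 Q2 + frob2 Q3).
Proof.
have h1 := frob2B P (Q1 + Q2 + Q3).
have h2 := frob2D (Q1 + Q2) Q3.
have h3 := frob2D Q1 Q2.
have := frob2_ge0 P; have := frob2_ge0 Q1; have := frob2_ge0 Q2; have := frob2_ge0 Q3.
lra.
Qed.

Lemma key_bound (R : realType) n m r (S : 'M[R]_(n, m)) (Y1 Y2 : 'M[R]_(n, r))
  (X1 X2 : 'M[R]_(r, m)) (M0 : R) :
  frob2 Y1 <= M0 -> frob2 Y2 <= M0 -> frob2 X1 <= M0 -> frob2 X2 <= M0 ->
  2 * ip (Y1 - Y2) (FY S Y1 X1 - FY S Y2 X2) + 2 * ip (X1 - X2) (FX S Y1 X1 - FX S Y2 X2)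
   <= (1 + 16 * (frob2 S + 3 * M0 ^+ 2)) * (frob2 (Y1 - Y2) + frob2 (X1 - X2)).
Proof.
move=> hY1 hY2 hX1 hX2.
set a := Y1 - Y2; set b := X1 - X2.
have A0 := frob2_ge0 a; have B0 := frob2_ge0 b; have S0 := frob2_ge0 S.
have M00 : 0 <= M0 by apply: le_trans hY1; exact: frob2_ge0.
have gY1 := frob2_ge0 Y1; have gY2 := frob2_ge0 Y2.
have gX1 := frob2_ge0 X1; have gX2 := frob2_ge0 X2.
have i1 := ip_le a (FY S Y1 X1 - FY S Y2 X2).
have i2 := ip_le b (FX S Y1 X1 - FX S Y2 X2).
have bY : frob2 (FY S Y1 X1 - FY S Y2 X2) <= 8 * (frob2 S + 3 * M0 ^+ 2) * (frob2 a + frob2 b).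
  rewrite FY_diff; apply: le_trans (frob2_4 _ _ _ _) _.
  have t1 : frob2 (S *m b^T) <= frob2 S * frob2 b.
    by rewrite -(frob2_tr b); exact: frob2M.
  have t2 : frob2 (a *m X1 *m X1^T) <= frob2 a * M0 * M0.
    apply: le_trans (frob2M3 _ _ _) _; rewrite frob2_tr.
    by apply: ler_pM3 => //; exact: frob2_ge0.
  have t3 : frob2 (Y2 *m b *m X1^T) <= M0 * frob2 b * M0.
    apply: le_trans (frob2M3 _ _ _) _; rewrite frob2_tr.
    by apply: ler_pM3 => //; exact: frob2_ge0.
  have t4 : frob2 (Y2 *m X2 *m b^T) <= M0 * M0 * frob2 b.
    apply: le_trans (frob2M3 _ _ _) _; rewrite frob2_tr.
    by apply: ler_pM3 => //; exact: frob2_ge0.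
  rewrite expr2; nra.
have bX : frob2 (FX S Y1 X1 - FX S Y2 X2) <= 8 * (frob2 S + 3 * M0 ^+ 2) * (frob2 a + frob2 b).
  rewrite FX_diff; apply: le_trans (frob2_4 _ _ _ _) _.
  have t1 : frob2 (a^T *m S) <= frob2 a * frob2 S.
    by rewrite -(frob2_tr a); exact: frob2M.
  have t2 : frob2 (a^T *m Y1 *m X1) <= frob2 a * M0 * M0.
    apply: le_trans (frob2M3 _ _ _) _; rewrite frob2_tr.
    by apply: ler_pM3 => //; exact: frob2_ge0.
  have t3 : frob2 (Y2^T *m a *m X1) <= M0 * frob2 a * M0.
    apply: le_trans (frob2M3 _ _ _) _; rewrite frob2_tr.
    by apply: ler_pM3 => //; exact: frob2_ge0.
  have t4 : frob2 (Y2^T *m Y2 *m b) <= M0 * M0 * frob2 b.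
    apply: le_trans (frob2M3 _ _ _) _; rewrite frob2_tr.
    by apply: ler_pM3 => //; exact: frob2_ge0.
  rewrite expr2; nra.
nra.
Qed.
Lemma frob2_eq0 (R : realType) p q (A : 'M[R]_(p, q)) : frob2 A <= 0 -> A = 0.
Proof.
move=> H; have H0 : frob2 A = 0 by apply/le_anti; rewrite H frob2_ge0.
apply/matrixP => i j; rewrite mxE.
have Hi : forall k : 'I_p, 0 <= \sum_(l < q) A k l ^+ 2.
  by move=> k; apply: sumr_ge0 => l _; exact: sqr_ge0.
have := (psumr_eq0P (fun k _ => Hi k) H0) i isT.
have Hj : forall l : 'I_q, 0 <= A i l ^+ 2 by move=> l; exact: sqr_ge0.
move=> /(psumr_eq0P (fun l _ => Hj l)) /(_ j isT) /eqP.
by rewrite sqrf_eq0 => /eqP.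
Qed.

Lemma frob2_0 (R : realType) p q : frob2 (0 : 'M[R]_(p, q)) = 0.
Proof. by rewrite /frob2 big1 // => i _; rewrite big1 // => j _; rewrite mxE expr0n. Qed.

Lemma ode_unique (R : realType) n m r (S : 'M[R]_(n, m)) (Y1 Y2 : R -> 'M[R]_(n, r))
  (X1 X2 : R -> 'M[R]_(r, m)) :
  (forall t : R, 0 < t -> is_derive t 1 Y1 (FY S (Y1 t) (X1 t))) ->
  (forall t : R, 0 < t -> is_derive t 1 X1 (FX S (Y1 t) (X1 t))) ->
  (forall t : R, 0 < t -> is_derive t 1 Y2 (FY S (Y2 t) (X2 t))) ->
  (forall t : R, 0 < t -> is_derive t 1 X2 (FX S (Y2 t) (X2 t))) ->
  Y1 t @[t --> 0^'+] --> Y1 0 -> X1 t @[t --> 0^'+] --> X1 0 ->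
  Y2 t @[t --> 0^'+] --> Y2 0 -> X2 t @[t --> 0^'+] --> X2 0 ->
  Y1 0 = Y2 0 -> X1 0 = X2 0 ->
  forall T : R, 0 <= T -> Y1 T = Y2 T /\ X1 T = X2 T.
Proof.
move=> dY1 dX1 dY2 dX2 cY1 cX1 cY2 cX2 e0Y e0X T.
rewrite le_eqVlt => /predU1P[<- | T0]; first by [].
pose G t := frob2 (Y1 t) + frob2 (X1 t) + frob2 (Y2 t) + frob2 (X2 t).
have cont_at : forall t : R, 0 < t -> G x @[x --> t] --> G t.
  move=> t t0.
  apply: cvgD; [apply: cvgD; [apply: cvgD|]|]; apply: cvg_frob2.
  - exact: (is_derive_cvg (dY1 t t0)).
  - exact: (is_derive_cvg (dX1 t t0)).
  - exact: (is_derive_cvg (dY2 t t0)).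
  - exact: (is_derive_cvg (dX2 t t0)).
have G0 : G x @[x --> 0^'+] --> G 0.
  by apply: cvgD; [apply: cvgD; [apply: cvgD|]|]; apply: cvg_frob2.
have Gc : {within `[0, T], continuous G}.
  apply/continuous_within_itvP => //; split.
  - move=> x; rewrite in_itv /= => /andP[x0 _]; exact: cont_at.
  - exact: G0.
  - apply: cvg_at_left_filter; exact: cont_at.
have [c c0T Gmax] := EVT_max (ltW T0) Gc.
set M0 := G c.
have bnd : forall t : R, 0 <= t -> t <= T ->
    [/\ frob2 (Y1 t) <= M0, frob2 (Y2 t) <= M0, frob2 (X1 t) <= M0 & frob2 (X2 t) <= M0].
  move=> t t0 tT; have := Gmax t; rewrite in_itv /= t0 tT => /(_ isT).
  rewrite /M0 /G => h.
  have h1 := frob2_ge0 (Y1 t); have h2 := frob2_ge0 (Y2 t).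
  have h3 := frob2_ge0 (X1 t); have h4 := frob2_ge0 (X2 t).
  split; lra.
pose E t := frob2 (Y1 t - Y2 t) + frob2 (X1 t - X2 t).
pose dE t := 2 * ip (Y1 t - Y2 t) (FY S (Y1 t) (X1 t) - FY S (Y2 t) (X2 t)) +
             2 * ip (X1 t - X2 t) (FX S (Y1 t) (X1 t) - FX S (Y2 t) (X2 t)).
pose K := 1 + 16 * (frob2 S + 3 * M0 ^+ 2).
have dEd : forall t : R, 0 < t -> t <= T -> is_derive t 1 E (dE t).
  move=> t t0 _; apply: is_deriveD1.
  - apply: (is_derive_frob2 (M := fun x => Y1 x - Y2 x)).
    by have := is_deriveB (dY1 t t0) (dY2 t t0).
  - apply: (is_derive_frob2 (M := fun x => X1 x - X2 x)).
    by have := is_deriveB (dX1 t t0) (dX2 t t0).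
have dEle : forall t : R, 0 < t -> t < T -> dE t <= K * E t.
  move=> t t0 tT; have [b1 b2 b3 b4] := bnd t (ltW t0) (ltW tT).
  exact: key_bound.
have E0 : E x @[x --> 0^'+] --> E 0.
  by apply: cvgD; apply: cvg_frob2; apply: cvgB.
have E00 : E 0 = 0 by rewrite /E e0Y e0X !subrr !frob2_0 addr0.
have ET := gronwall T0 dEd dEle E0 E00.
have := frob2_ge0 (Y1 T - Y2 T); have := frob2_ge0 (X1 T - X2 T).
move: ET; rewrite /E => ET h1 h2.
split; apply/eqP; rewrite -subr_eq0; apply/eqP; apply: frob2_eq0; lra.
Qed.
Lemma nonincr0 (R : realType) (f df : R -> R) :
  (forall t : R, 0 < t -> is_derive t 1 f (df t)) ->
  (forall t : R, 0 < t -> df t <= 0) ->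
  f t @[t --> 0^'+] --> f 0 -> forall T : R, 0 <= T -> f T <= f 0.
Proof.
move=> fd dfle fc T; rewrite le_eqVlt => /predU1P[<- | T0]; first by [].
have hc : {within `[0, T], continuous f}.
  apply/continuous_within_itvP => //; split.
  - move=> x; rewrite in_itv /= => /andP[x0 xT].
    exact: (is_derive_cvg (fd x x0)).
  - exact: fc.
  - apply: cvg_at_left_filter; exact: (is_derive_cvg (fd T T0)).
apply: (@ler0_derive1_le_cc _ f 0 T) => //.
- move=> x; rewrite in_itv /= => /andP[x0 xT]; by case: (fd x x0).
- move=> x; rewrite in_itv /= => /andP[x0 xT].
  have dfx := fd x x0; rewrite derive1E derive_val; exact: dfle.
- by rewrite in_itv /= lexx ltW.
- by rewrite in_itv /= lexx ltW.
- exact: ltW.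
Qed.

Lemma const0 (R : realType) (f : R -> R) :
  (forall t : R, 0 < t -> is_derive t 1 f 0) ->
  f t @[t --> 0^'+] --> f 0 -> forall T : R, 0 <= T -> f T = f 0.
Proof.
move=> fd fc T T0; apply/le_anti; rewrite (nonincr0 (df := fun _ => 0) fd) //=.
have := @nonincr0 R (fun t => - f t) (fun _ => 0).
move=> /(_ _ _ _ T T0); rewrite lerN2; apply => //.
- move=> t t0; have := is_deriveN (fd t t0); rewrite oppr0; by [].
- by apply: cvgN.
Qed.

Lemma scalar_conv (R : realType) (y x : R -> R) (s : R) :
  (forall t : R, 0 < t -> is_derive t 1 y ((s - y t * x t) * x t)) ->
  (forall t : R, 0 < t -> is_derive t 1 x (y t * (s - y t * x t))) ->
  y t @[t --> 0^'+] --> y 0 -> x t @[t --> 0^'+] --> x 0 ->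
  y 0 = 0 -> x 0 != 0 ->
  y t * x t @[t --> +oo] --> s.
Proof.
move=> dy dx cy cx y0 x0.
set c := x 0 ^+ 2.
have c0 : 0 < c by rewrite /c lt0r sqrf_eq0 x0 sqr_ge0.
have inv : forall t : R, 0 <= t -> x t ^+ 2 - y t ^+ 2 = c.
  move=> t t0.
  have H1 : forall u : R, 0 < u -> is_derive u 1 (fun t => x t ^+ 2 - y t ^+ 2) 0.
    move=> u u0.
    have := is_deriveB1 (is_deriveM1 (dx u u0) (dx u u0)) (is_deriveM1 (dy u u0) (dy u u0)).
    by move=> H; apply: is_derive_eq H _; ring.
  have H2 : (fun t => x t ^+ 2 - y t ^+ 2) t @[t --> 0^'+] --> x 0 ^+ 2 - y 0 ^+ 2.
    by apply: cvgB; apply: cvgM.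
  have := @const0 R (fun t => x t ^+ 2 - y t ^+ 2) H1 H2 t t0.
  by rewrite /= y0 expr0n subr0.
pose h t := (s - y t * x t) ^+ 2 * expR (2 * c * t).
have dh : forall t : R, 0 < t -> is_derive t 1 h
    ((s - y t * x t) ^+ 2 * (expR (2 * c * t) * (2 * c)) +
     expR (2 * c * t) * (2 * (s - y t * x t) *
       - (y t * (y t * (s - y t * x t)) + x t * ((s - y t * x t) * x t)))).
  move=> t t0; apply: is_deriveM1.
  - have H1 := is_deriveM1 (dy t t0) (dx t t0).
    have H2 := is_deriveB1 (is_derive_cst s t 1) H1.
    by have := is_deriveM1 H2 H2 => H; apply: is_derive_eq H _; rewrite /cst; ring.
  - apply: (is_derive_comp1 (f := fun t => 2 * c * t) (g := expR)).
    exact: is_derive_lin1.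
have hle' : forall t : R, 0 <= t -> h t <= h 0.
  move=> t t0; apply: (nonincr0 dh) => //.
  - move=> u u0; have := inv u (ltW u0); have := expR_gt0 (2 * c * u).
    set e := expR _; set d := s - _ => e0 iv.
    have -> : d ^+ 2 * (e * (2 * c)) +
      e * (2 * d * - (y u * (y u * d) + x u * (d * x u))) =
      - (2 * e * d ^+ 2 * ((x u ^+ 2 - y u ^+ 2) + 2 * y u ^+ 2)) + 2 * e * d ^+ 2 * c.
      ring.
    rewrite iv; have P := mulr_ge0 (mulr_ge0 (ltW e0) (sqr_ge0 d)) (sqr_ge0 (y u)); nra.
  - apply: cvgM.
      have H : (s - y t * x t) @[t --> 0^'+] --> s - y 0 * x 0.
        by apply: cvgB; [exact: cvg_cst | apply: cvgM].
      have K := cvgM H H; apply: K.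
    apply: cvg_at_right_filter.
    have := is_derive_cvg (is_derive_comp1 (f := fun t => 2 * c * t) (g := expR)
       (is_derive_lin1 (2 * c) 0) (is_derive_expR _)).
    by [].
have hle : forall t : R, 0 <= t -> h t <= s ^+ 2.
  by move=> t t0; have := hle' t t0; rewrite /h y0 mul0r subr0 mulr0 expR0 mulr1.
apply/cvgrPdist_lt => e e0.
near=> t.
have t0 : 0 <= t by near: t; apply: nbhs_pinfty_ge; rewrite num_real.
have tb : s ^+ 2 / e ^+ 2 / (2 * c) < t.
  by near: t; apply: nbhs_pinfty_gt; rewrite num_real.
have := hle t t0; rewrite /h => H.
have eg := expR_ge1Dx (2 * c * t).
have q0 := sqr_ge0 (s - y t * x t).
have H2 : (s - y t * x t) ^+ 2 * (1 + 2 * c * t) <= s ^+ 2.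
  apply: le_trans H; apply: ler_wpM2l => //.
have e20 : 0 < e ^+ 2 by rewrite exprn_gt0.
have H3 : s ^+ 2 < e ^+ 2 * (1 + 2 * c * t).
  have c2 : 0 < 2 * c by rewrite mulr_gt0.
  move: tb; rewrite (ltr_pdivrMr _ _ c2) (ltr_pdivrMr _ _ e20).
  have := sqr_ge0 s; nra.
have H4 : (s - y t * x t) ^+ 2 < e ^+ 2.
  have p0 : 0 < 1 + 2 * c * t by have := mulr_ge0 (ltW c0) t0; nra.
  nra.
rewrite ltr_norml; apply/andP; split; nra.
Unshelve. all: by end_near. Qed.
Lemma is_deriveZl1 (R : realType) (f : R -> R) (c x df : R) :
  is_derive x 1 f df -> is_derive x 1 (fun t => c * f t) (c * df).
Proof.
move=> H; have := is_deriveM1 (is_derive_cst c x 1) H.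
by move=> H2; apply: is_derive_eq H2 _; rewrite /cst mulr0 addr0.
Qed.

Lemma is_derive_mull (R : realType) a p q (A : 'M[R]_(a, p)) (M : R -> 'M[R]_(p, q)) (t : R) D :
  is_derive t 1 M D -> is_derive t 1 (fun x => A *m M x) (A *m D).
Proof.
move/is_derive_mxP => H; apply/is_derive_mxP => i j.
have -> : (fun x => (A *m M x) i j) = (fun x => \sum_k A i k * M x k j).
  by apply/funext => x; rewrite mxE.
rewrite mxE; apply: is_derive_sum1 => k; exact: is_deriveZl1.
Qed.

Lemma is_derive_mulr (R : realType) p q b (M : R -> 'M[R]_(p, q)) (B : 'M[R]_(q, b)) (t : R) D :
  is_derive t 1 M D -> is_derive t 1 (fun x => M x *m B) (D *m B).
Proof.
move/is_derive_mxP => H; apply/is_derive_mxP => i j.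
have -> : (fun x => (M x *m B) i j) = (fun x => \sum_k B k j * M x i k).
  by apply/funext => x; rewrite mxE; apply: eq_bigr => k _; rewrite mulrC.
rewrite mxE (eq_bigr (fun k => B k j * D i k)); last by move=> k _; rewrite mulrC.
apply: is_derive_sum1 => k; exact: is_deriveZl1.
Qed.

Lemma cvg_mull (R : realType) a p q (T : Type) (F : set_system T) {FF : Filter F}
  (A : 'M[R]_(a, p)) (M : T -> 'M[R]_(p, q)) (L : 'M[R]_(p, q)) :
  M x @[x --> F] --> L -> A *m M x @[x --> F] --> A *m L.
Proof.
move=> H; apply: cvg_entries_mx => i j.
have -> : (fun x => (A *m M x) i j) = (fun x => \sum_k A i k * M x k j).
  by apply/funext => x; rewrite mxE.
rewrite mxE; apply: cvg_sum1 => k; apply: cvgM; first exact: cvg_cst.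
exact: cvg_mx_entry.
Qed.

Lemma cvg_mulr (R : realType) p q b (T : Type) (F : set_system T) {FF : Filter F}
  (M : T -> 'M[R]_(p, q)) (B : 'M[R]_(q, b)) (L : 'M[R]_(p, q)) :
  M x @[x --> F] --> L -> M x *m B @[x --> F] --> L *m B.
Proof.
move=> H; apply: cvg_entries_mx => i j.
have -> : (fun x => (M x *m B) i j) = (fun x => \sum_k M x i k * B k j).
  by apply/funext => x; rewrite mxE.
rewrite mxE; apply: cvg_sum1 => k; apply: cvgM; last exact: cvg_cst.
exact: cvg_mx_entry.
Qed.

Lemma sum_single (R : realType) N (F : 'I_N -> R) (j0 : 'I_N) :
  (forall j : 'I_N, j != j0 -> F j = 0) -> \sum_j F j = F j0.
Proof.
move=> H; rewrite (bigD1 j0) //= big1 ?addr0 // => j /H; exact.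
Qed.

Lemma frob2_tr_mul (R : realType) p q (A : 'M[R]_(p, q)) : frob2 A = \tr (A *m A^T).
Proof.
rewrite /frob2 /mxtrace; apply: eq_bigr => i _; rewrite !mxE.
by apply: eq_bigr => j _; rewrite !mxE expr2.
Qed.

Lemma frob2_orth (R : realType) n m (U : 'M[R]_n) (V : 'M[R]_m) (A : 'M[R]_(n, m)) :
  U^T *m U = 1%:M -> V^T *m V = 1%:M -> frob2 (U *m A *m V^T) = frob2 A.
Proof.
move=> hU hV.
rewrite !frob2_tr_mul !trmx_mul trmxK.
rewrite -!mulmxA [V^T *m _]mulmxA hV mul1mx.
rewrite mxtrace_mulC -!mulmxA hU mulmx1 //.
Qed.
Lemma mx_expand (R : realType) n m (U : 'M[R]_n) (V : 'M[R]_m) (P : 'M[R]_(n, m)) :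
  U *m P *m V^T = \sum_(i < n) \sum_(j < m) P i j *: (col i U *m (col j V)^T).
Proof.
apply/matrixP => a b; rewrite !mxE summxE.
under [RHS]eq_bigr do rewrite summxE.
rewrite exchange_big /=; apply: eq_bigr => j _.
rewrite !mxE mulr_suml; apply: eq_bigr => i _.
rewrite !mxE big_ord1 !mxE; ring.
Qed.

Lemma FY_sym (R : realType) n m r (D : 'M[R]_n) (E : 'M[R]_r) (F : 'M[R]_m)
  (S : 'M[R]_(n, m)) (Y : 'M[R]_(n, r)) (X : 'M[R]_(r, m)) :
  D *m D = 1%:M -> E *m E = 1%:M -> F *m F = 1%:M -> E^T = E -> F^T = F ->
  D *m S = S *m F ->
  FY S (D *m Y *m E) (E *m X *m F) = D *m FY S Y X *m E.
Proof.
move=> hD hE hF tE tF hS.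
rewrite /FY !trmx_mul tE tF.
rewrite !mulmxBl !mulmxBr !mulmxA !mulmxBl -hS.
congr (_ - _).
rewrite -[D *m Y *m E *m E]mulmxA hE mulmx1.
rewrite -[D *m Y *m X *m F *m F]mulmxA hF mulmx1.
by [].
Qed.

Lemma FX_sym (R : realType) n m r (D : 'M[R]_n) (E : 'M[R]_r) (F : 'M[R]_m)
  (S : 'M[R]_(n, m)) (Y : 'M[R]_(n, r)) (X : 'M[R]_(r, m)) :
  D *m D = 1%:M -> E *m E = 1%:M -> F *m F = 1%:M -> D^T = D -> E^T = E ->
  D *m S = S *m F ->
  FX S (D *m Y *m E) (E *m X *m F) = E *m FX S Y X *m F.
Proof.
move=> hD hE hF tD tE hS.
rewrite /FX !trmx_mul tE tD.
rewrite ?mulmxBl ?mulmxBr ?mulmxA ?mulmxBl ?mulmxBr ?mulmxA.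
rewrite -[E *m Y^T *m D *m S]mulmxA hS mulmxA.
congr (_ - _).
rewrite -[E *m Y^T *m D *m D]mulmxA hD mulmx1.
rewrite -[E *m Y^T *m Y *m E *m E]mulmxA hE mulmx1.
by [].
Qed.
Lemma sum_minn (R : realType) n m r (s : nat -> R) :
  \sum_(a < n) (if (a < m)%N && (r <= a)%N then s a ^+ 2 else 0) =
  \sum_(k < minn n m | (r <= k)%N) s k ^+ 2.
Proof.
rewrite -(big_mkord xpredT (fun a => if (a < m)%N && (r <= a)%N then s a ^+ 2 else 0)).
have -> : \sum_(k < minn n m | (r <= k)%N) s k ^+ 2 =
    \sum_(0 <= k < minn n m | (r <= k)%N) s k ^+ 2 by rewrite big_mkord.
case: (leqP n m) => nm; rewrite [RHS]big_mkcond /=.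
- apply: eq_big_nat => a /andP[_ an].
  by rewrite (leq_trans an nm).
- rewrite (big_cat_nat (leq0n m) (ltnW nm)) /=.
  rewrite [X in _ + X]big1_seq ?addr0.
    apply: eq_big_nat => a /andP[_ am]; by rewrite am.
  move=> a /andP[_]; rewrite mem_index_iota => /andP[ma _].
  by rewrite ltnNge ma.
Qed.

Definition eps (R : realType) (p k : nat) : R := if k == p then -1 else 1.
Definition Dg (R : realType) (p a : nat) : 'M[R]_a := diag_mx (\row_(i < a) eps R p i).

Lemma eps_sq (R : realType) p k : eps R p k * eps R p k = 1.
Proof. by rewrite /eps; case: ifP => _; rewrite ?mulN1r ?opprK ?mulr1. Qed.

Lemma Dg_sq (R : realType) p a : Dg R p a *m Dg R p a = 1%:M.
Proof.
apply/matrixP => i j; rewrite /Dg mul_diag_mx !mxE.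
by case: (i == j); rewrite ?mulr1n ?mulr0n ?mulr1 ?mulr0 ?eps_sq.
Qed.

Lemma Dg_tr (R : realType) p a : (Dg R p a)^T = Dg R p a.
Proof. exact: tr_diag_mx. Qed.

Lemma Dg_act (R : realType) p a b (M : 'M[R]_(a, b)) i j :
  (Dg R p a *m M *m Dg R p b) i j = eps R p i * M i j * eps R p j.
Proof. by rewrite /Dg mul_mx_diag mul_diag_mx !mxE. Qed.

Lemma Dg_S (R : realType) p n m (s : nat -> R) :
  Dg R p n *m (\matrix_(i < n, j < m) if (i : nat) == j then s i else 0) =
  (\matrix_(i < n, j < m) if (i : nat) == j then s i else 0) *m Dg R p m.
Proof.
apply/matrixP => i j; rewrite /Dg mul_mx_diag mul_diag_mx !mxE.
case: eqP => [->|_]; last by rewrite mulr0 mul0r.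
by rewrite mulrC.
Qed.

Unset Implicit Arguments.

Theorem theorem2p11 (R : realType) (n m r : nat) (W0 : 'M[R]_(n, m))
  (U : 'M[R]_n) (V : 'M[R]_m) (s : nat -> R) (Xt0 : 'M[R]_(r, m))
  (Y : R -> 'M[R]_(n, r)) (X : R -> 'M[R]_(r, m)) :
  (1 <= r)%N -> (r < \rank W0)%N ->
  (* singular value decomposition W0 = U Sigma0 V^T *)
  U^T *m U = 1%:M -> V^T *m V = 1%:M ->
  (forall k : nat, (k < minn n m)%N -> 0 <= s k) ->
  (forall k l : nat, (k <= l)%N -> (l < minn n m)%N -> s l <= s k) ->
  W0 = U *m (\matrix_(i < n, j < m) if (i : nat) == j then s i else 0) *m V^T ->
  (* boundedness of the LoRA gradient-descent iterates *)
  lora_gd_bounded W0 0 (Xt0 *m V^T) ->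
  (* spectral-type initialization *)
  (forall (i : 'I_r) (j : 'I_m), (i : nat) != j -> Xt0 i j = 0) ->
  (forall (i : 'I_r) (j : 'I_m), (i : nat) = j -> Xt0 i j != 0) ->
  (* gradient flow on [0, +oo) *)
  (forall t : R, 0 < t -> is_derive t 1 Y ((W0 - Y t *m X t) *m (X t)^T)) ->
  (forall t : R, 0 < t -> is_derive t 1 X ((Y t)^T *m (W0 - Y t *m X t))) ->
  Y t @[t --> 0^'+] --> Y 0 -> X t @[t --> 0^'+] --> X 0 ->
  Y 0 = 0 -> X 0 = Xt0 *m V^T ->
  (Y t *m X t @[t --> +oo] -->
     \sum_(i < n) \sum_(j < m | ((i : nat) == j) && (i < r)%N)
        s i *: (col i U *m (col j V)^T))
  /\
  (frob2 (W0 - Y t *m X t) @[t --> +oo] -->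
     \sum_(k < minn n m | (r <= k)%N) s k ^+ 2).
Proof.
move=> r1 rrank hU hV _ _ hW _ hoff hdiag dY dX cY cX Y0 X0.
have rn : (r < n)%N by apply: leq_trans rrank (rank_leq_row W0).
have rm : (r < m)%N by apply: leq_trans rrank (rank_leq_col W0).
have hU' : U *m U^T = 1%:M by apply: mulmx1C.
have hV' : V *m V^T = 1%:M by apply: mulmx1C.
set S := \matrix_(i < n, j < m) if (i : nat) == j then s i else 0.
pose Yt t := U^T *m Y t.
pose Xt t := X t *m V.
have dYt : forall t : R, 0 < t -> is_derive t 1 Yt (FY S (Yt t) (Xt t)).
  move=> t t0; have H := is_derive_mull U^T (dY t t0).
  apply: is_derive_eq H _.
  rewrite /FY /Yt /Xt hW trmx_mul !mulmxBl !mulmxBr !mulmxA hU mul1mx.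
  by rewrite -[_ *m V *m V^T]mulmxA hV' mulmx1.
have dXt : forall t : R, 0 < t -> is_derive t 1 Xt (FX S (Yt t) (Xt t)).
  move=> t t0; have H := is_derive_mulr V (dX t t0).
  apply: is_derive_eq H _.
  rewrite /FX /Yt /Xt hW trmx_mul trmxK ?mulmxBl ?mulmxBr ?mulmxA ?mulmxBl ?mulmxBr ?mulmxA.
  rewrite -[_ *m V^T *m V]mulmxA hV mulmx1.
  by rewrite -[(Y t)^T *m U *m U^T]mulmxA hU' mulmx1.
have cYt : Yt t @[t --> 0^'+] --> Yt 0 by apply: cvg_mull.
have cXt : Xt t @[t --> 0^'+] --> Xt 0 by apply: cvg_mulr.
have Yt0 : Yt 0 = 0 by rewrite /Yt Y0 mulmx0.
have Xt00 : Xt 0 = Xt0 by rewrite /Xt X0 -mulmxA hV mulmx1.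
have sym : forall p : nat, forall t : R, 0 <= t ->
    Yt t = Dg R p n *m Yt t *m Dg R p r /\ Xt t = Dg R p r *m Xt t *m Dg R p m.
  move=> p; apply: (ode_unique (S := S)) => //.
  - move=> t t0; have H := is_derive_mulr (Dg R p r) (is_derive_mull (Dg R p n) (dYt t t0)).
    apply: is_derive_eq H _; rewrite FY_sym //; by [exact: Dg_sq|exact: Dg_tr|exact: Dg_S].
  - move=> t t0; have H := is_derive_mulr (Dg R p m) (is_derive_mull (Dg R p r) (dXt t t0)).
    apply: is_derive_eq H _; rewrite FX_sym //; by [exact: Dg_sq|exact: Dg_tr|exact: Dg_S].
  - by apply: cvg_mulr; apply: cvg_mull.
  - by apply: cvg_mulr; apply: cvg_mull.
  - by rewrite Yt0 mulmx0 mul0mx.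
  - rewrite Xt00; apply/matrixP => i j; rewrite Dg_act.
    case: (eqVneq (i : nat) j) => [e|ne]; last by rewrite hoff // mulr0 mul0r.
    by rewrite -e mulrC mulrA eps_sq mul1r.
have offY : forall t : R, 0 <= t -> forall (k : 'I_n) (i : 'I_r), (k : nat) != i -> Yt t k i = 0.
  move=> t t0 k i ki; have [h _] := sym k t t0.
  have := congr1 (fun M : 'M[R]_(n, r) => M k i) h; rewrite /= Dg_act /eps eqxx.
  rewrite (negbTE (_ : (i : nat) != k)); last by rewrite eq_sym.
  move=> e; lra.
have offX : forall t : R, 0 <= t -> forall (i : 'I_r) (j : 'I_m), (i : nat) != j -> Xt t i j = 0.
  move=> t t0 i j ij; have [_ h] := sym i t t0.
  have := congr1 (fun M : 'M[R]_(r, m) => M i j) h; rewrite /= Dg_act /eps eqxx.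
  rewrite (negbTE (_ : (j : nat) != i)); last by rewrite eq_sym.
  move=> e; lra.
pose ni (i : 'I_r) : 'I_n := widen_ord (ltnW rn) i.
pose mi (i : 'I_r) : 'I_m := widen_ord (ltnW rm) i.
have Pdiag : forall t : R, 0 <= t -> forall i : 'I_r,
    (Yt t *m Xt t) (ni i) (mi i) = Yt t (ni i) i * Xt t i (mi i).
  move=> t t0 i; rewrite mxE (@sum_single _ _ _ i) // => l li.
  rewrite offY ?mul0r //=; by rewrite eq_sym.
have Poff : forall t : R, 0 <= t -> forall (a : 'I_n) (b : 'I_m),
    ~~ (((a : nat) == b) && (a < r)%N) -> (Yt t *m Xt t) a b = 0.
  move=> t t0 a b ab; rewrite mxE big1 // => l _.
  case: (eqVneq (a : nat) l) => [al|al]; last by rewrite offY ?mul0r.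
  rewrite (offX t t0 l b) ?mulr0 //.
  apply: contra ab => /eqP lb; by rewrite al lb eqxx /= -lb ltn_ord.
have Smi : forall i : 'I_r, S (ni i) (mi i) = s i by move=> i; rewrite mxE /= eqxx.
have conv : forall i : 'I_r, Yt t (ni i) i * Xt t i (mi i) @[t --> +oo] --> s i.
  move=> i; apply: (scalar_conv (y := fun t => Yt t (ni i) i) (x := fun t => Xt t i (mi i))).
  - move=> t t0; have H := (is_derive_mxP _ _ _).1 (dYt t t0) (ni i) i.
    apply: is_derive_eq H _.
    rewrite /FY mxE (@sum_single _ _ _ (mi i)).
      by rewrite [(S - _) _ _]mxE [(_^T) _ _]mxE [X in _ + X]mxE Pdiag ?(ltW t0) // Smi.
    move=> j ji; rewrite [(_^T) _ _]mxE offX ?mulr0 ?(ltW t0) //=.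
    by apply: contra ji => /eqP e; apply/eqP/val_inj.
  - move=> t t0; have H := (is_derive_mxP _ _ _).1 (dXt t t0) i (mi i).
    apply: is_derive_eq H _.
    rewrite /FX mxE (@sum_single _ _ _ (ni i)).
      by rewrite [(S - _) _ _]mxE [(_^T) _ _]mxE [X in _ + X]mxE Pdiag ?(ltW t0) // Smi.
    move=> k ki; rewrite [(_^T) _ _]mxE offY ?mul0r ?(ltW t0) //=.
  - exact: cvg_mx_entry.
  - exact: cvg_mx_entry.
  - by rewrite Yt0 mxE.
  - by rewrite Xt00; apply: hdiag.
pose Dr := \matrix_(a < n, b < m) if ((a : nat) == b) && (a < r)%N then s a else 0.
have HP : (Yt t *m Xt t) @[t --> +oo] --> Dr.
  apply: cvg_entries_mx => a b; rewrite mxE.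
  case: ifP => cond.
  - move/andP: cond => [/eqP ab ar].
    pose i := Ordinal ar.
    have ea : a = ni i by apply: val_inj.
    have eb : b = mi i by apply: val_inj; rewrite /= -ab.
    rewrite ea eb; apply: cvg_trans (conv i).
    apply: near_eq_cvg; apply: filterS (nbhs_pinfty_ge (num_real (0 : R))).
    by move=> t t0; rewrite /= Pdiag.
  - apply: cvg_trans (cvg_cst (0 : R)).
    apply: near_eq_cvg; apply: filterS (nbhs_pinfty_ge (num_real (0 : R))).
    by move=> t t0; rewrite /= Poff ?cond.
  exact: (@filter_filter R _ proper_pinfty_nbhs).
have YXe : forall t : R, Y t *m X t = U *m (Yt t *m Xt t) *m V^T.
  move=> t; rewrite /Yt /Xt !mulmxA hU' mul1mx.
  by rewrite -[_ *m V *m V^T]mulmxA hV' mulmx1.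
split.
- have K := cvg_mulr (B := V^T) (cvg_mull (A := U) HP).
  have E : U *m Dr *m V^T = \sum_(i < n) \sum_(j < m | ((i : nat) == j) && (i < r)%N)
        s i *: (col i U *m (col j V)^T).
    rewrite mx_expand; apply: eq_bigr => i _; rewrite [RHS]big_mkcond /=.
    apply: eq_bigr => j _; rewrite mxE; case: ifP => _ //; by rewrite scale0r.
  rewrite E in K; rewrite (eq_cvg _ _ YXe); exact: K.
- have FE : forall t : R, frob2 (W0 - Y t *m X t) = frob2 (S - Yt t *m Xt t).
    move=> t; rewrite YXe hW -mulmxBl -mulmxBr; exact: frob2_orth.
  rewrite (eq_cvg _ _ FE).
  have K := cvg_frob2 (cvgB (cvg_cst S) HP).
  have E : frob2 (S - Dr) = \sum_(k < minn n m | (r <= k)%N) s k ^+ 2.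
    rewrite /frob2 -sum_minn; apply: eq_bigr => a _.
    case: (ltnP a m) => am.
    + rewrite (@sum_single _ _ _ (Ordinal am)).
        rewrite !mxE /= eqxx /=.
        case: (ltnP a r) => ar /=; first by rewrite subrr expr0n.
        by rewrite subr0.
      move=> j ja; rewrite !mxE.
      have -> : ((a : nat) == j) = false.
        by apply/negbTE; apply: contra ja => /eqP e; apply/eqP/val_inj.
      by rewrite /= subrr expr0n.
    + rewrite big1; last first.
        move=> j _; rewrite !mxE.
        have -> : ((a : nat) == j) = false.
          by apply/negbTE; rewrite neq_ltn (leq_trans (ltn_ord j) am) orbT.
        by rewrite /= subrr expr0n.
      by [].
  rewrite E in K; exact: K.
Qed.
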